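(* Let $X,Y,\tilde X,\tilde Y$ be cellular spaces with $X,\tilde X$ compact, let $r\ge0$, and let $g\colon Y^X\to\tilde Y^{\tilde X}$ be a primitive transform. If $a,b\colon X\to Y$ are maps with $a\overset{r}{\approx}b$, then $g(a)\overset{r}{\approx}g(b)$.
   Context: Cellular space = based CW complex; maps based unless called unbased. $Y^X$ = space of based maps $X\to Y$ (compact-open), based at the constant map. A transform is an unbased (continuous) map $g\colon Y^X\to\tilde Y^{\tilde X}$; it is primitive if for each $p\in\tilde X$ there are a point $k(p)\in X$ and an unbased map $h^p\colon Y\to\tilde Y$ such that $g(d)(p)=h^p(d(k(p)))$ for all $d\in Y^X$. Strong similarity: $\langle W\rangle$ = free abelian group on a set $W$. $Y^X_a$ = path component of $a$; $V\mapsto V|_R$ restriction; $\mathcal F_n(X)$ = finite $R\subseteq X$ containing the basepoint with $|R|\le n+1$; $\langle Y^X\rangle^{(s)}=\{V:V|_R=0\ \forall R\in\mathcal F_{s-1}(X)\}$. For unbased $U,V$: $V^{(U)}$ = unbased maps; $\Xi^U(v)$ = constant map at $v$; for $U=\coprod_iU_i$, $\boxed{\sqcup}_i\langle w_i\rangle=\langle w\rangle$, $w|_{U_i}=w_i$, multilinear. For nonempty finite $E$: simplex $\Delta E$, faces $\Delta F$; layouts = sets $A$ of pairwise disjoint nonempty subsets; $\Delta[A]=\coprod_{F\in A}\Delta F$; $S\in\langle V^{(\Delta E)}\rangle$ fissile if $S|_{\Delta[A]}=\boxed{\sqcup}_{F\in A}S|_{\Delta F}$ for all layouts. $U\wr X=(U\times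 X)/(U\times\{x_0\})$, $\#^X(w)(u\wr x)=w(u)(x)$, $\langle (Y^X)^{(U)}\rangle^{(s)}_X=\langle\#^X\rangle^{-1}\langle Y^{U\wr X}\rangle^{(s)}$. $a\overset{r}{\approx}b$ iff for each nonempty finite $E$ there is a fissile $S\in\langle (Y^X_a)^{(\Delta E)}\rangle$ with $\langle\Xi^{\Delta E}(b)\rangle-S\in\langle (Y^X)^{(\Delta E)}\rangle^{(r+1)}_X$. *)

(* Defs.v *)
From HB Require Import structures.
From mathcomp Require Import all_boot all_order all_algebra.
From mathcomp Require Import all_classical all_reals all_analysis.
Import Order.TTheory GRing.Theory Num.Theory.
Import numFieldTopology.Exports.

Set Implicit Arguments.
Unset Strict Implicit.
Unset Printing Implicit Defensive.

Local Open Scope classical_set_scope.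
Local Open Scope ring_scope.

(* Cells are modelled on the closed unit ball of 'rV[R]_n for the (max)     *)
(* norm of mathcomp-analysis, i.e. the cube [-1,1]^n, which is homeomorphic  *)
(* to D^n with boundary S^{n-1} going to the boundary.                       *)

Definition cdisk (R : realType) (n : nat) : set 'rV[R]_n := [set v | `|v| <= 1].
Definition odisk (R : realType) (n : nat) : set 'rV[R]_n := [set v | `|v| < 1].
Definition bsphere (R : realType) (n : nat) : set 'rV[R]_n := [set v | `|v| = 1].
Arguments cdisk R n : clear implicits.
Arguments odisk R n : clear implicits.
Arguments bsphere R n : clear implicits.

(* X (with basepoint x0) is a CW complex with x0 a 0-cell: there is a family
   of cells indexed by I, of dimension dim i, with characteristic maps Phi i:
   - X is Hausdorff;
   - Phi i is continuous on the closed disk;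
   - Phi i restricted to the open disk is a homeomorphism onto the cell
     e_i := Phi i (open disk) (injective, and relatively open);
   - the cells partition X;
   - Phi i maps the boundary sphere into finitely many cells of lower
     dimension (closure finiteness + attaching in the lower skeleton);
   - X carries the weak topology w.r.t. the closed cells Phi i (closed disk);
   - x0 is a 0-cell. *)
Definition cellular (R : realType) (X : topologicalType) (x0 : X) : Prop :=
  exists (I : Type) (dim : I -> nat) (Phi : forall i, 'rV[R]_(dim i) -> X),
    let e := fun i => Phi i @` odisk R (dim i) in
    [/\ hausdorff_space X,
        (forall i, {within cdisk R (dim i), continuous (Phi i)}),
        (forall i u v, odisk R (dim i) u -> odisk R (dim i) v ->
             Phi i u = Phi i v -> u = v),
        (forall i (U : set 'rV[R]_(dim i)), open U ->
             exists W : set X, open W /\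
               Phi i @` (U `&` odisk R (dim i)) = W `&` e i) &
        (forall x : X, exists! i, e i x) ] /\
    [/\ (forall i, exists J : set I, finite_set J /\
             (forall j, J j -> (dim j < dim i)%N) /\
             Phi i @` bsphere R (dim i) `<=` \bigcup_(j in J) e j),
        (forall A : set X,
             (forall i, closed (A `&` Phi i @` cdisk R (dim i))) -> closed A) &
        (exists i, dim i = 0%N /\ Phi i 0 = x0) ].

(* Y^X as a subset of all functions X -> Y, carrying the compact-open
   topology (subspace of mathcomp-analysis's {compact-open, X -> Y}). *)
Definition co (X Y : topologicalType) : topologicalType := {compact-open, X -> Y}.

Definition based (X Y : topologicalType) (x0 : X) (y0 : Y) (d : X -> Y) : Prop :=
  continuous d /\ d x0 = y0.

Definition in_pcomp (R : realType) (X Y : topologicalType) (x0 : X) (y0 : Y)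
    (a d : X -> Y) : Prop :=
  exists gam : R -> co X Y,
    [/\ {within `[0, 1], continuous gam},
        (forall t, `[0, 1]%classic t -> based x0 y0 (gam t)),
        gam 0 = a & gam 1 = d].

(* <W> for W a subset of a type T: finitely supported functions T -> int    *)
(* with support inside W (coefficient functions of formal sums).           *)

Definition free_ab (T : Type) (W : set T) (V : T -> int) : Prop :=
  finite_set [set t | V t != 0] /\ (forall t, V t != 0 -> W t).

Definition fgen (T : choiceType) (t0 : T) : T -> int :=
  fun t => if t == t0 then 1 else 0.

Definition pushf (A B : choiceType) (f : A -> B) (V : A -> int) : B -> int :=
  fun b => \sum_(a \in [set a | f a = b]) V a.

Definition card_atmost (T : Type) (S : set T) (n : nat) : Prop :=
  exists f : 'I_n -> T, S `<=` range f.

Definition restr (T : Type) (U : Type) (S : set T) (d : T -> U) : S -> U :=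
  fun t => d (set_val t).

(** * Half-smash U wr X = (U x X)/(U x {x0}) as a pointed set               *)
(* Points are represented by canonical representatives: None for the        *)
(* basepoint (the collapsed U x {x0}), Some (u, x) with x <> x0 otherwise.  *)

Definition wr_ok (U X : Type) (x0 : X) (p : option (U * X)) : Prop :=
  match p with None => True | Some (_, x) => x <> x0 end.

Definition wr (U X : Type) (x0 : X) : Type := {p : option (U * X) | wr_ok x0 p}.

Definition wr_base (U X : Type) (x0 : X) : wr U x0 := exist _ None I.

Definition hash (U X Y : Type) (x0 : X) (y0 : Y) (w : U -> X -> Y) : wr U x0 -> Y :=
  fun p => match proj1_sig p with None => y0 | Some (u, x) => w u x end.
Arguments wr_ok {U X} x0 p.
Arguments wr U {X} x0.
Arguments wr_base U {X} x0.
Arguments hash {U X Y} x0 y0 w p.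

(* <(Y^X)^(U)>^(s)_X = <#^X>^{-1} <Y^{U wr X}>^(s): the image under <#^X>
   restricts to 0 on every finite R in F_{s-1}(U wr X), i.e. containing the
   basepoint and with at most s points. *)
Definition filt_wr (U X : Type) (Y : choiceType) (x0 : X) (y0 : Y) (s : nat)
    (T : (U -> X -> Y) -> int) : Prop :=
  forall Rs : set (wr U x0), Rs (wr_base U x0) -> card_atmost Rs s ->
    pushf (@restr _ Y Rs) (pushf (hash x0 y0) T) = (fun _ => 0).

Definition simplex_set (R : realType) (E : finType) : set {ptws E -> R} :=
  [set t | (forall e, 0 <= t e) /\ \sum_(e : E) t e = 1].

Arguments simplex_set R E : clear implicits.
Definition simplex (R : realType) (E : finType) : topologicalType :=
  set_type (simplex_set R E).
Arguments simplex R E : clear implicits.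

Definition face (R : realType) (E : finType) (F : {set E}) : set (simplex R E) :=
  [set t | forall e, e \notin F -> (set_val t : {ptws E -> R}) e = 0].
Arguments face R {E} F.

(* Delta[A] = coproduct of the faces Delta F, F in A; for a layout these
   faces are pairwise disjoint closed subsets of Delta E, so Delta[A] is
   their union with the subspace topology. *)
Definition lay (R : realType) (E : finType) (A : {set {set E}}) : set (simplex R E) :=
  [set t | exists2 F, F \in A & face R F t].
Arguments lay R {E} A.

Definition layout (E : finType) (A : {set {set E}}) : Prop :=
  (forall F, F \in A -> (0 < #|F|)%N) /\
  (forall F G, F \in A -> G \in A -> F != G -> forall e, e \in F -> e \notin G).

Lemma face_lay_subproof (R : realType) (E : finType) (A : {set {set E}})
  (F : {set E}) (hF : F \in A) (t : face R F) : set_val t \in lay R A.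
Proof.
apply/mem_set; exists F => //.
by case: t => /= t; rewrite /set_val /= /eqincl => /set_mem.
Qed.

Definition face_incl (R : realType) (E : finType) (A : {set {set E}})
  (F : {set E}) (hF : F \in A) : face R F -> lay R A :=
  fun t => exist _ (set_val t) (face_lay_subproof hF t).

(* the multilinear extension of gluing: for V_F in <V^(Delta F)>, F in A,
   the coefficient of <w> in box-union_F V_F is prod_F V_F(w|Delta F)
   (gluing is a bijection between families (w_F)_F and maps w on Delta[A]) *)
Definition boxunion (R : realType) (E : finType) (A : {set {set E}}) (V : Type)
  (VF : forall F : {set E}, (face R F -> V) -> int) : (lay R A -> V) -> int :=
  fun w => \prod_(F : {F : {set E} | F \in A})
             VF (sval F) (w \o face_incl (svalP F)).

Definition fissile (R : realType) (E : finType) (V : choiceType)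
    (S : (simplex R E -> V) -> int) : Prop :=
  forall A : {set {set E}}, layout A ->
    pushf (@restr _ V (lay R A)) S =
    boxunion (fun F => pushf (@restr _ V (face R F)) S).

Definition approx_r (R : realType) (X Y : topologicalType) (x0 : X) (y0 : Y)
    (r : nat) (a b : X -> Y) : Prop :=
  forall E : finType, (0 < #|E|)%N ->
    exists S : (simplex R E -> X -> Y) -> int,
      [/\ free_ab (fun w : simplex R E -> X -> Y =>
                     continuous (w : simplex R E -> co X Y) /\
                     forall u, in_pcomp R x0 y0 a (w u)) S,
          fissile S &
          filt_wr x0 y0 r.+1 (fgen (fun _ : simplex R E => b) \- S)].

Definition transform (X Y Xt Yt : topologicalType) (x0 : X) (y0 : Y)
    (xt0 : Xt) (yt0 : Yt) (g : co X Y -> co Xt Yt) : Prop :=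
  (forall d, based x0 y0 d -> based xt0 yt0 (g d)) /\
  {within [set d : co X Y | based x0 y0 d], continuous g}.

Definition primitive (X Y Xt Yt : topologicalType) (x0 : X) (y0 : Y)
    (g : co X Y -> co Xt Yt) : Prop :=
  forall p : Xt, exists (k : X) (h : Y -> Yt),
    continuous h /\ forall d, based x0 y0 d -> g d p = h (d k).

(* Main.v *)
Require Import Defs.
From HB Require Import structures.
From mathcomp Require Import all_boot all_order all_algebra.
From mathcomp Require Import all_classical all_reals all_analysis.
Import Order.TTheory GRing.Theory Num.Theory.
Import numFieldTopology.Exports.
Local Open Scope classical_set_scope.
Local Open Scope ring_scope.

Definition supp_in {A : eqType} (V : A -> int) (s : seq A) := forall a, V a != 0 -> a \in s.

Lemma pushfE {A B : choiceType} (f : A -> B) {V s} : uniq s -> supp_in V s -> forall b,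
  pushf f V b = \sum_(a <- s) (if f a == b then V a else 0).
Proof.
move=> us sV b; rewrite -big_mkcond bigfs //; last first.
  by move=> i _; apply: contraNeq => /sV.
rewrite /pushf; apply: eq_fsbigl; apply/seteqP; split => x /=. 
  by move=> fx; rewrite unfold_in /= fx eqxx.
by rewrite unfold_in /= => /eqP.
Qed.

Lemma pushf_supp {A B : choiceType} (f : A -> B) {V s} : uniq s -> supp_in V s ->
  supp_in (pushf f V) (undup (map f s)).
Proof.
move=> us sV b; rewrite (pushfE _ us sV) mem_undup; apply: contraNT => bn.
rewrite big_seq big1 // => a ias; case: eqP => // fab.
by move: bn; rewrite -fab map_f.
Qed.

Lemma pushf_comp {A B C : choiceType} (f : A -> B) (g : B -> C) V s : uniq s -> supp_in V s ->
  pushf g (pushf f V) = pushf (g \o f) V.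
Proof.
move=> us sV; apply/funext => c.
rewrite (pushfE _ (undup_uniq _) (pushf_supp f us sV)) (pushfE _ us sV).
under eq_bigr => b _ do rewrite (pushfE _ us sV) -big_mkcond /=.
rewrite big_mkcond /=.
transitivity (\sum_(b <- undup (map f s)) \sum_(a <- s) (if (g b == c) && (f a == b) then V a else 0)).
  apply: eq_bigr => b _; case: ifP => gb; first by rewrite big_mkcond.
    by rewrite big1.
rewrite exchange_big /=; apply: eq_big_seq => a ias.
rewrite (bigD1_seq (f a)) ?mem_undup ?map_f ?undup_uniq //= eqxx andbT.
rewrite big1 ?addr0 // => b /negbTE nb; by rewrite (eq_sym (f a)) nb andbF.
Qed.

Lemma comp_within {T U W : topologicalType} (A : set T) (B : set U)
  (f : T -> U) (g : U -> W) :
  {within A, continuous f} -> (forall t, A t -> B (f t)) ->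
  {within B, continuous g} -> {within A, continuous (g \o f)}.
Proof.
move=> fc fAB gc.
have fc' := @subspaceT_continuous _ _ A B (mkfun_fun fAB) fc.
move=> x; have h1 := fc' x; have h2 := gc (f x). move=> P hP; have h3 := h2 P hP. have h4 := h1 _ h3. exact: h4.
Qed.

Lemma free_seq {A : choiceType} {W : set A} {V : A -> int} :
  free_ab W V -> exists s, [/\ uniq s, supp_in V s & forall a, a \in s -> W a].
Proof.
move=> [fV WV]; exists (finmap.enum_fset (fset_set [set t | V t != 0])); split; first exact: finmap.fset_uniq.
  by move=> a Va; rewrite in_fset_set // inE.
by move=> a; rewrite in_fset_set // inE => /WV.
Qed.

Lemma pushf_sub {A B : choiceType} (f : A -> B) V1 V2 s : uniq s ->
  supp_in V1 s -> supp_in V2 s -> pushf f (V1 \- V2) = pushf f V1 \- pushf f V2.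
Proof.
move=> us s1 s2; apply/funext => b.
have s12 : supp_in (V1 \- V2) s.
  move=> a /=; case: (eqVneq (V1 a) 0) => [e|/s1 //].
  by rewrite e sub0r oppr_eq0 => /s2.
rewrite /= !(pushfE _ us) // -sumrB; apply: eq_bigr => a _; case: ifP => //.
Qed.

Lemma pushf_fgen {A B : choiceType} (f : A -> B) c : pushf f (fgen c) = fgen (f c).
Proof.
apply/funext => b; rewrite (@pushfE _ _ f _ [:: c]) //.
  by rewrite big_seq1 /fgen eqxx eq_sym.
rewrite /supp_in /fgen => a; rewrite inE; by case: (a == c).
Qed.

Lemma pushf_eq {A B : choiceType} (f f' : A -> B) V s : uniq s -> supp_in V s ->
  {in s, f =1 f'} -> pushf f V = pushf f' V.
Proof.
move=> us sV ff; apply/funext => b; rewrite !(pushfE _ us sV).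
by apply: eq_big_seq => a /ff ->.
Qed.

Lemma sum_neq0 {A : eqType} (s : seq A) (F : A -> int) :
  \sum_(a <- s) F a != 0 -> exists2 a, a \in s & F a != 0.
Proof.
move=> H; case: (boolP (has (fun a => F a != 0) s)) => [/hasP [a ? ?]|/hasPn h].
  by exists a.
by move: H; rewrite big_seq big1 ?eqxx // => a /h; rewrite negbK => /eqP.
Qed.

Lemma pcomp_based (R : realType) (X Y : topologicalType) (x0 : X) (y0 : Y) (a d : X -> Y) :
  in_pcomp R x0 y0 a d -> based x0 y0 d.
Proof.
move=> [gam [_ h _ <-]]; apply: h; by rewrite /= in_itv /= ler01 lexx.
Qed.
Arguments pcomp_based {R X Y x0 y0 a d}.

Lemma pushf0 {A B : choiceType} (f : A -> B) : pushf f (fun _ => 0) = (fun _ => 0).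
Proof.
apply/funext => b; rewrite (@pushfE _ _ f _ [::]) ?big_nil //.
Qed.

Section Fis.
Variables (R : realType) (E : finType) (A : {set {set E}}).
Hypothesis lA : layout A.
Local Notation I := {F : {set E} | F \in A}.

Definition Fof (t : lay R A) : I :=
  let c := @cid2 _ (fun F => F \in A) (fun F => face R F (val t)) (set_mem (valP t)) in
  exist (fun F => F \in A) (s2val c) (s2valP c).

Lemma Fof_face (t : lay R A) : face R (sval (Fof t)) (val t).
Proof. exact: (s2valP' (@cid2 _ (fun F => F \in A) (fun F => face R F (val t)) (set_mem (valP t)))). Qed.

Lemma face_uniq (F F' : {set E}) (t : simplex R E) : F \in A -> F' \in A ->
  face R F t -> face R F' t -> F = F'.
Proof.
move=> hF hF' ft ft'; apply/eqP; apply/negPn/negP => ne.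
have [_ s1] := set_mem (valP t).
have z : forall e, (set_val t : {ptws E -> R}) e = 0.
  move=> e; case: (boolP (e \in F)) => eF.
    by apply: ft'; exact: (lA.2 F F' hF hF' ne e eF).
  exact: ft.
move: s1; rewrite big1; last by move=> e _; exact: z.
by move/eqP; rewrite eq_sym oner_eq0.
Qed.

Lemma Fof_incl (F : I) (t : face R (sval F)) : Fof (face_incl (svalP F) t) = F.
Proof.
apply: val_inj; apply: (@face_uniq _ _ (val (face_incl (svalP F) t))).
- exact: (valP (Fof _)).
- exact: (valP F).
- exact: Fof_face.
- exact: (set_mem (valP t)).
Qed.

Variables (V : choiceType) (n : nat) (sig : 'I_n -> (simplex R E -> V)).

Definition glue (phi : {ffun I -> 'I_n}) (t : lay R A) : V := sig (phi (Fof t)) (val t).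

Lemma glue_eq (V'' : choiceType) (h : V -> V'') (phi : {ffun I -> 'I_n}) (w' : lay R A -> V'') :
  [forall F : I, ((fun t : face R (sval F) => h (sig (phi F) (set_val t)))
                   == w' \o face_incl (svalP F))]
  = ((fun t => h (glue phi t)) == w').
Proof.
apply/forallP/eqP.
- move=> H; apply/funext => t.
  have ft := Fof_face t.
  pose t2 : face R (sval (Fof t)) := exist _ (val t) (mem_set ft).
  have e : face_incl (svalP (Fof t)) t2 = t by apply: val_inj.
  move/eqP/(congr1 (fun f => f t2)): (H (Fof t)) => /=.
  by rewrite e /glue => <-.
- move=> <- F; apply/eqP/funext => t /=; by rewrite /glue Fof_incl.
Qed.
End Fis.

Lemma prod_if {I : finType} (c : I -> bool) (x : I -> int) :
  \prod_i (if c i then x i else 0) = if [forall i, c i] then \prod_i x i else 0.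
Proof.
case: (boolP [forall i, c i]) => [/forallP h|/forallPn [i hi]].
  by apply: eq_bigr => i _; rewrite h.
by rewrite (bigD1 i) //= (negbTE hi) mul0r.
Qed.

Lemma sum_pick {T : eqType} (L : seq T) (y : T) (F : T -> int) :
  uniq L -> y \in L -> \sum_(z <- L) (if y == z then F z else 0) = F y.
Proof.
move=> uL yL; rewrite (bigD1_seq y) //= eqxx big1 ?addr0 // => z /negbTE nz.
by rewrite eq_sym nz.
Qed.

Section Fis2.
Variables (R : realType) (E : finType) (A : {set {set E}}).
Hypothesis lA : layout A.
Local Notation I := {F : {set E} | F \in A}.
Variables (V : choiceType) (n : nat) (sig : 'I_n -> (simplex R E -> V)).

Lemma prod_glue (V'' : choiceType) (h : V -> V'') (w' : lay R A -> V'') (c : 'I_n -> int) :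
  \prod_(F : I) \sum_(i < n) (if (fun t : face R (sval F) => h (sig i (set_val t)))
                                == w' \o face_incl (svalP F) then c i else 0)
  = \sum_(phi : {ffun I -> 'I_n})
      (if (fun t => h (@glue R E A V n sig phi t)) == w' then \prod_(F : I) c (phi F) else 0).
Proof.
rewrite bigA_distr_bigA; apply: eq_bigr => phi _.
by rewrite prod_if (@glue_eq R E A lA V n sig).
Qed.
End Fis2.

Lemma fissile_push (R : realType) (E : finType) (V V' : choiceType) (h : V -> V')
  (S : (simplex R E -> V) -> int) (s : seq (simplex R E -> V)) :
  uniq s -> supp_in S s -> fissile S -> fissile (pushf (fun w u => h (w u)) S).
Proof.
move=> us sS fS A lA; apply/funext => w'.
have fSA := fS A lA.
pose G := fun (w : simplex R E -> V) (u : simplex R E) => h (w u).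
pose sig := fun i : 'I_(size s) => tnth (in_tuple s) i.
pose gl := @glue R E A V (size s) sig.
pose P := fun phi : {ffun {F : {set E} | F \in A} -> 'I_(size s)} =>
  \prod_(F : {F : {set E} | F \in A}) S (sig (phi F)).
have fSA' : forall w0 : lay R A -> V,
    \sum_(w <- s) (if @restr _ V (lay R A) w == w0 then S w else 0)
    = \sum_phi (if gl phi == w0 then P phi else 0).
  move=> w0; move/(congr1 (fun f => f w0)): fSA; rewrite (pushfE _ us sS) => ->.
  rewrite /boxunion.
  under eq_bigr => F _ do rewrite (pushfE _ us sS) big_tnth.
  exact: (@prod_glue R E A lA V (size s) sig V (fun x => x) w0 (fun i => S (sig i))).
rewrite (pushf_comp _ _ _ _ us sS) (pushfE _ us sS) /boxunion.
under [RHS]eq_bigr => F _ do rewrite (pushf_comp (fun w u => h (w u)) (@restr _ V' (face R (sval F))) _ _ us sS) (pushfE _ us sS) big_tnth.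
rewrite (@prod_glue R E A lA V (size s) sig V' h w' (fun i => S (sig i))).
pose L := undup (map (@restr _ V (lay R A)) s ++ map gl (enum {ffun {F : {set E} | F \in A} -> 'I_(size s)})).
have uL : uniq L by exact: undup_uniq.
symmetry.
transitivity (\sum_phi \sum_(z <- L)
   (if gl phi == z then (if (fun t => h (z t)) == w' then P phi else 0) else 0)).
  apply: eq_bigr => phi _.
  rewrite (@sum_pick _ L (gl phi) (fun z => if (fun t => h (z t)) == w' then P phi else 0)) //.
  by rewrite mem_undup mem_cat; apply/orP; right; apply: map_f; rewrite mem_enum.
rewrite exchange_big /=.
transitivity (\sum_(z <- L) \sum_(w <- s)
   (if @restr _ V (lay R A) w == z then (if (fun t => h (z t)) == w' then S w else 0) else 0)).
  apply: eq_bigr => z _ /=; have [e|ne] := boolP ((fun t => h (z t)) == w').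
    exact: (esym (fSA' z)).
  by rewrite !big1 // => ? _; case: ifP.
rewrite exchange_big /=; apply: eq_big_seq => w ws.
rewrite (@sum_pick _ L (@restr _ V (lay R A) w) (fun z => if (fun t => h (z t)) == w' then S w else 0)) //.
by rewrite mem_undup mem_cat (map_f _ ws).
Qed.

Theorem lemma4p3 (R : realType) (X Y Xt Yt : topologicalType)
    (x0 : X) (y0 : Y) (xt0 : Xt) (yt0 : Yt) :
  cellular R x0 -> cellular R y0 -> cellular R xt0 -> cellular R yt0 ->
  compact [set: X] -> compact [set: Xt] ->
  forall (r : nat) (g : co X Y -> co Xt Yt),
    transform x0 y0 xt0 yt0 g -> primitive x0 y0 g ->
    forall a b : X -> Y, based x0 y0 a -> based x0 y0 b ->
      approx_r R x0 y0 r a b -> approx_r R xt0 yt0 r (g a) (g b).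
Proof.
move=> _ _ _ _ _ _ r g [gB gC] gP a b aB bB Hab E E0.
have [S [SF Sfis Sfilt]] := Hab E E0.
have [s [us sS sW]] := free_seq SF.
pose G := fun (w : simplex R E -> X -> Y) (u : simplex R E) => (g (w u) : Xt -> Yt).
exists (pushf G S); split.
- split.
    apply: (sub_finite_set _ (finite_seq (undup (map G s)))) => w' /= H.
    exact: (pushf_supp G us sS).
  move=> w'; rewrite (pushfE G us sS) => /sum_neq0 [w ws]; case: (eqVneq (G w) w') => [<- Sw|_]; last by rewrite eqxx.
  have [wc wp] := sW w ws.
  have wB : forall u, based x0 y0 (w u) := fun u => pcomp_based (wp u).
  split.
    apply/continuous_subspace_setT.
    have h := (@comp_within _ _ _ setT [set d : co X Y | based x0 y0 d] (w : simplex R E -> co X Y) g).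
    apply: h => //; last by move=> t _; exact: wB.
    exact: (proj1 (continuous_subspace_setT _) wc).
  move=> u; have [gam [gc g01 g0 g1]] := wp u.
  exists (g \o gam); split.
  + by apply: (comp_within _ _ _ _ gc _ gC) => t /g01.
  + by move=> t /g01 /gB.
  + by rewrite /= g0.
  + by rewrite /= g1.
- exact: (@fissile_push R E _ _ g S s us sS Sfis).
- pose c := fun _ : simplex R E => b.
  pose s' := undup (c :: s).
  have us' : uniq s' by exact: undup_uniq.
  have sS' : supp_in S s' by move=> w /sS ws; rewrite mem_undup inE ws orbT.
  have sc' : supp_in (fgen c) s'.
    by move=> w; rewrite /fgen mem_undup inE; case: (w == c).
  have Bs' : forall w, w \in s' -> forall u, based x0 y0 (w u).
    move=> w; rewrite mem_undup inE => /orP [/eqP -> u|/sW [_ wp] u]; first exact: bB.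
    exact: pcomp_based (wp u).
  have -> : fgen (fun _ => g b) \- pushf G S = pushf G (fgen c \- S).
    by rewrite (pushf_sub G _ _ _ us' sc' sS') pushf_fgen.
  have sT : supp_in (fgen c \- S) s'.
    move=> w /=; case: (eqVneq (fgen c w) 0) => [e|/sc' //].
    by rewrite e sub0r oppr_eq0 => /sS'.
  move=> Rs Rs0 [f Rsf].
  have [K HK] := choice gP.
  have [Hh HH] := choice HK.
  pose phi := fun q : wr (simplex R E) xt0 =>
    match proj1_sig q with
    | None => wr_base (simplex R E) x0
    | Some (u, p) => match pselect (K p = x0) with
                     | left _ => wr_base (simplex R E) x0
                     | right np => exist (fun z => wr_ok x0 z) (Some (u, K p)) np
                     end
    end.
  pose Hq := fun q : wr (simplex R E) xt0 =>
    match proj1_sig q with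
    | None => fun _ : Y => yt0
    | Some (_, p) => Hh p
    end.
  have key : forall w, (forall u, based x0 y0 (w u)) ->
      forall q, hash xt0 yt0 (G w) q = Hq q (hash x0 y0 w (phi q)).
    move=> w wB [z ok]; case: z ok => [[u p]|] ok //=.
    rewrite /hash /phi /Hq /G /=; case: pselect => [e|ne] /=.
      have [_ HHp] := HH p; rewrite (HHp (w u) (wB u)) e.
      by case: (wB u) => _ ->.
    by have [_ HHp] := HH p; rewrite (HHp (w u) (wB u)).
  pose Rs' := phi @` Rs.
  have Rs0' : Rs' (wr_base _ x0) by exists (wr_base _ xt0).
  have Rsc' : card_atmost Rs' r.+1.
    by exists (phi \o f) => _ [q /Rsf [i _ <-] <-]; exists i.
  pose phiR := fun q : Rs => (exist _ (phi (set_val q)) (mem_set (imageP phi (set_valP q))) : Rs').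
  pose Psi := fun (v : Rs' -> Y) (q : Rs) => Hq (set_val q) (v (phiR q)).
  rewrite (pushf_comp G (hash xt0 yt0) _ _ us' sT) (pushf_comp _ (@restr _ Yt Rs) _ _ us' sT).
  rewrite (@pushf_eq _ _ _ (Psi \o (@restr _ Y Rs' \o hash x0 y0)) _ _ us' sT); last first.
    move=> w /Bs' wB; apply/funext => q; rewrite /= /restr /Psi /=.
    exact: key.
  rewrite -(pushf_comp _ Psi _ _ us' sT) -(pushf_comp _ _ _ _ us' sT).
  by rewrite (Sfilt Rs' Rs0' Rsc') pushf0.
Qed.
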